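(* In the stochastic extra-momentum scheme (defined in the context), choose $\theta=\frac18$, $\alpha=\frac1{4L}$, $\tau=\frac{\alpha}{1+\theta/\kappa}$, $\gamma=\frac{1}{8(\kappa+\theta)}$. Then for every $k\ge0$, $$\mathbb E\big[\|z^k-z^*\|^2\big]\le2\Big(1-\frac1{8\kappa+1}\Big)^k\|z^0-z^*\|^2+\frac{128\sigma^2}{\mu(8L+\mu)}+\frac{4\delta^2}{\mu^2}.$$
   Context: Let $\mathcal Z\subseteq\mathbb R^n$ be a nonempty closed convex set. Let $F:\mathcal Z\to\mathbb R^n$ satisfy $(F(z)-F(z'))^\top(z-z')\ge\mu\|z-z'\|^2$ and $\|F(z)-F(z')\|\le L\|z-z'\|$ for all $z,z'\in\mathcal Z$, where $0<\mu\le L$; $\kappa=L/\mu$. Let $z^*$ be the unique point of $\mathcal Z$ with $F(z^* )^\top(z-z^* )\ge 0$ for all $z\in\mathcal Z$. $P_{\mathcal Z}$ denotes Euclidean projection onto $\mathcal Z$. A stochastic oracle returns $\hat F(z,\xi)$ for a random sample $\xi$, and satisfies, for every $z\in\mathcal Z$, $\mathbb E_\xi\|\hat F(z,\xi)-F(z)\|\le\delta$ and $\mathbb E_\xi\|\hat F(z,\xi)-F(z)\|^2\le\sigma^2$ for constants $\delta,\sigma\ge0$. Each oracle call $\hat F(z^j)$ means $\hat F(z^j,\xi^j)$ with a fresh sample independent of all previous samples. The stochastic extra-momentum scheme: starting from $z^0\in\mathcal Z$ with $z^{-1}:=z^0$ and $\hat F(z^{-1}):=\hat F(z^0)$, for $k\ge0$,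 $z^{k+1}=P_{\mathcal Z}(z^k-\alpha\hat F(z^k)+\gamma(z^k-z^{k-1})-\tau(\hat F(z^k)-\hat F(z^{k-1})))$. *)

(* Defs.v *)
From mathcomp Require Import all_boot all_order all_algebra.
From mathcomp Require Import all_classical all_reals all_analysis.
Set Implicit Arguments. Unset Strict Implicit. Unset Printing Implicit Defensive.
Import Order.TTheory GRing.Theory Num.Theory.
Local Open Scope classical_set_scope.
Local Open Scope ring_scope.

Section Defs.
Variables (R : realType) (n : nat).
Notation vec := 'rV[R]_n.

Definition dotv (u v : vec) : R := \sum_(i < n) u 0 i * v 0 i.
Definition enorm (u : vec) : R := Num.sqrt (dotv u u).

(** Closedness for the Euclidean (= product) topology of R^n. *)
Definition eclosed (Z : set vec) : Prop := closed (Z : set 'rV[R^o]_n).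

Definition em_convex_set (Z : set vec) : Prop :=
  forall x y, Z x -> Z y -> forall t : R, 0 <= t <= 1 -> Z (t *: x + (1 - t) *: y).

Definition em_is_proj (Z : set vec) (P : vec -> vec) : Prop :=
  forall x, Z (P x) /\ forall y, Z y -> enorm (x - P x) <= enorm (x - y).

Definition is_VI_sol (Z : set vec) (F : vec -> vec) (zs : vec) : Prop :=
  Z zs /\ forall z, Z z -> 0 <= dotv (F zs) (z - zs).

Definition em_strongly_monotone (Z : set vec) (F : vec -> vec) (mu : R) : Prop :=
  forall z z', Z z -> Z z' -> mu * enorm (z - z') ^+ 2 <= dotv (F z - F z') (z - z').

Definition em_lipschitz_on (Z : set vec) (F : vec -> vec) (L : R) : Prop :=
  forall z z', Z z -> Z z' -> enorm (F z - F z') <= L * enorm (z - z').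

Definition rectangles d (Xi : measurableType d) : set (set ('rV[R^o]_n * Xi)) :=
  [set A `*` B | A in [set A : set 'rV[R^o]_n | open A]
               & B in [set B : set Xi | measurable B]].

(** Joint measurability of the oracle (z, xi) |-> Fhat z xi, w.r.t.
    Borel(R^n) (x) (sigma-algebra of Xi), coordinatewise. *)
Definition oracle_measurable d (Xi : measurableType d) (Fhat : vec -> Xi -> vec) : Prop :=
  forall i : 'I_n,
    measurable_fun setT
      (fun p : g_sigma_algebraType (@rectangles d Xi) => Fhat p.1 p.2 0 i : R).

(** The stochastic extra-momentum scheme driven by the sample sequence s
    (s j = xi^j, the sample used by the j-th oracle call, at z^j).
    em_traj s k = (z^k, z^(k-1)), with z^(-1) = z^0; the oracle value
    Fhat(z^(k-1)) is the one computed at step k-1 (same sample s (k-1)),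
    and Fhat(z^(-1)) := Fhat(z^0). *)
Fixpoint em_traj d (Xi : measurableType d) (Fhat : vec -> Xi -> vec)
    (P : vec -> vec) (alpha gamma tau : R) (z0 : vec) (s : nat -> Xi) (k : nat)
    : vec * vec :=
  match k with
  | 0 => (z0, z0)
  | k'.+1 =>
      let (zk, zkm1) := em_traj Fhat P alpha gamma tau z0 s k' in
      let gk := Fhat zk (s k') in
      let gkm1 := if k' is k''.+1 then Fhat zkm1 (s k'') else gk in
      (P (zk - alpha *: gk + gamma *: (zk - zkm1) - tau *: (gk - gkm1)), zk)
  end.

Definition em_iter d (Xi : measurableType d) (Fhat : vec -> Xi -> vec)
    (P : vec -> vec) (alpha gamma tau : R) (z0 : vec) (s : nat -> Xi) (k : nat) : vec :=
  (em_traj Fhat P alpha gamma tau z0 s k).1.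

End Defs.

Definition upd (X : Type) (s : nat -> X) (j : nat) (x : X) : nat -> X :=
  fun i => if i == j then x else s i.

(** Expectation over the first m samples xi^0, ..., xi^(m-1), drawn
    independently from the probability P (fresh samples): iterated integral
    E[f] = int dP(xi^0) ... int dP(xi^(m-1)) f(xi^0, ..., xi^(m-1)).
    The remaining coordinates of s are irrelevant for f depending only on
    the first m samples. *)
Local Open Scope ereal_scope.
Fixpoint iexp d (Xi : measurableType d) (R : realType) (P : probability Xi R)
    (m : nat) (f : (nat -> Xi) -> \bar R) (s : nat -> Xi) : \bar R :=
  match m with
  | 0 => f s
  | m'.+1 => iexp P m' (fun s' => \int[P]_x f (upd s' m' x)) s
  end.

(* Main.v *)
Require Import Defs.
From mathcomp Require Import all_boot all_order all_algebra.
From mathcomp Require Import all_classical all_reals all_analysis.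
From mathcomp Require Import measurable_realfun.
From mathcomp Require Import ring lra.
Import Order.TTheory GRing.Theory Num.Theory.
Local Open Scope classical_set_scope.
Local Open Scope ring_scope.

Section Alg.
Variables (R : realType) (n : nat).
Local Notation vec := 'rV[R]_n.
Definition Nv (u : vec) := dotv u u.

Lemma Nv_ge0 (u : vec) : 0 <= Nv u.
Proof. by apply: sumr_ge0 => i _; rewrite -expr2 sqr_ge0. Qed.

Lemma enorm_sq (u : vec) : enorm u ^+ 2 = Nv u.
Proof. by rewrite /enorm sqr_sqrtr // Nv_ge0. Qed.

Lemma enorm_ge0 (u : vec) : 0 <= enorm u.
Proof. exact: sqrtr_ge0. Qed.

Lemma dotv_sum (u v : vec) : dotv u v = \sum_(i < n) u 0 i * v 0 i.
Proof. by []. Qed.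

Lemma Nv_eq0 (u : vec) : Nv u = 0 -> forall i, u 0 i = 0.
Proof.
move=> /eqP; rewrite /Nv /dotv psumr_eq0; last by move=> i _; rewrite -expr2 sqr_ge0.
move=> /allP H i; have := H i (mem_index_enum _); rewrite mulf_eq0 orbb => /eqP //.
Qed.

Lemma CS (u v : vec) : dotv u v <= enorm u * enorm v.
Proof.
set a := enorm u; set b := enorm v.
have a0 : 0 <= a by exact: enorm_ge0.
have b0 : 0 <= b by exact: enorm_ge0.
have Hu : a ^+ 2 = Nv u by exact: enorm_sq.
have Hv : b ^+ 2 = Nv v by exact: enorm_sq.
have key : 0 <= Nv (b *: u - a *: v).
  exact: Nv_ge0.
have E : Nv (b *: u - a *: v) = b^+2 * Nv u - 2 * a * b * dotv u v + a^+2 * Nv v.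
  rewrite /Nv /dotv !mulr_sumr -!sumrN -!big_split /=.
  apply: eq_bigr => i _; rewrite !mxE; ring.
rewrite E -Hu -Hv in key.
have [a00|ap] := eqVneq a 0.
  have : Nv u = 0 by rewrite -Hu a00 expr0n.
  move=> /Nv_eq0 H0; rewrite a00 mul0r /dotv big1 // => i _; by rewrite H0 mul0r.
have [b00|bp] := eqVneq b 0.
  have : Nv v = 0 by rewrite -Hv b00 expr0n.
  move=> /Nv_eq0 H0; rewrite b00 mulr0 /dotv big1 // => i _; by rewrite H0 mulr0.
have ab : 0 < a * b by rewrite mulr_gt0 // lt0r ?ap ?bp.
nra.
Qed.

Ltac sumify :=
  rewrite /Nv /dotv;
  rewrite ?(mulrDr, mulrBr, mulrN, mulNr, opprD, opprK, mulr_sumr);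
  rewrite -?sumrN -?big_split /=.

Lemma proj_ineq (Z : set vec) (P : vec -> vec) (y z : vec) :
  em_convex_set Z -> em_is_proj Z P -> Z z -> dotv (y - P y) (z - P y) <= 0.
Proof.
move=> cvx prj Zz; have [ZPy near] := prj y.
set p := P y; set u := y - p; set v := z - p.
have H t : 0 < t <= 1 -> 2 * dotv u v <= t * Nv v.
  move=> /andP[t0 t1].
  have Zt : Z (t *: z + (1 - t) *: p) by apply: cvx => //; rewrite ltW.
  have : Nv (y - p) <= Nv (y - (t *: z + (1 - t) *: p)).
    by have := near _ Zt; rewrite /enorm ler_sqrt //; exact: Nv_ge0.
  have -> : y - (t *: z + (1 - t) *: p) = u - t *: v.
    by apply/rowP => i; rewrite !mxE; ring.
  have -> : Nv (u - t *: v) = Nv u - 2 * t * dotv u v + t ^+ 2 * Nv v.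
    apply/eqP; rewrite -subr_eq0; apply/eqP; sumify.
    by apply: big1 => i _; rewrite !mxE; ring.
  move=> Hle.
  have : 2 * t * dotv u v <= t ^+ 2 * Nv v by lra.
  move=> Hq; have : t * (2 * dotv u v) <= t * (t * Nv v).
    have E1 : t * (2 * dotv u v) = 2 * t * dotv u v by ring.
    have E2 : t * (t * Nv v) = t ^+ 2 * Nv v by ring.
    by rewrite E1 E2.
  by rewrite ler_pM2l.
rewrite leNgt; apply/negP => uv0.
have Nv0 := Nv_ge0 v.
set t := dotv u v / (dotv u v + Nv v).
have den : 0 < dotv u v + Nv v by lra.
have t0 : 0 < t by rewrite divr_gt0.
have t1 : t <= 1 by rewrite ler_pdivrMr // mul1r; lra.
have := H t; rewrite t0 t1 => /(_ isT).
have : t * Nv v < dotv u v.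
  rewrite /t mulrAC ltr_pdivrMr // mulrDr; nra.
lra.
Qed.

Lemma lipG (F : vec -> vec) (mu L : R) (z zp : vec) :
  mu * Nv (z - zp) <= dotv (F z - F zp) (z - zp) ->
  Nv (F z - F zp) <= L ^+ 2 * Nv (z - zp) -> 0 <= mu ->
  Nv ((F z - F zp) - (mu / 2) *: (z - zp)) <= L ^+ 2 * Nv (z - zp).
Proof.
move=> sm lp mu0.
have -> : Nv ((F z - F zp) - (mu / 2) *: (z - zp)) =
   Nv (F z - F zp) - mu * dotv (F z - F zp) (z - zp) + (mu / 2) ^+ 2 * Nv (z - zp).
  apply/eqP; rewrite -subr_eq0; apply/eqP; sumify.
  by apply: big1 => i _; rewrite !mxE; field.
have := Nv_ge0 (z - zp); nra.
Qed.

Section Key.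
Variables (F : vec -> vec) (zs : vec) (mu c L : R).
Definition alphK := 2 * c / mu.
Definition tauK := alphK / (1 + c).
Definition gamK := c / (1 + c).
Definition betK := 2 * c / (1 + c).
Definition hh := 8 * tauK ^+ 2.
Definition AA := (2 + c) * hh.

Definition Vf (z zp gp : vec) : R :=
  (1 + betK) * Nv (z - zs)
  - 2 * tauK * dotv (((F z - F zs) - (mu / 2) *: (z - zs))
                    - ((F zp - F zs) - (mu / 2) *: (zp - zs)) - (gp - F zp)) (z - zs)
  + 1 / 4 * Nv (z - zp) + hh * Nv (gp - F zp).

Hypothesis mu0 : 0 < mu.
Hypothesis c0 : 0 < c.
Hypothesis c8 : c <= 1 / 8.
Hypothesis L0 : 0 < L.
Hypothesis tauL : tauK * L <= 1 / 4.

Lemma key (z zp z' g gp : vec) :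
  let y := z - alphK *: g + gamK *: (z - zp) - tauK *: (g - gp) in
  0 <= dotv (y - z') (z' - zs) ->
  0 <= dotv (F zs) (z' - zs) ->
  mu * Nv (z' - zs) <= dotv (F z' - F zs) (z' - zs) ->
  mu * Nv (z - zp) <= dotv (F z - F zp) (z - zp) ->
  Nv (F z - F zp) <= L ^+ 2 * Nv (z - zp) ->
  (1 + c) * Vf z' z g <= Vf z zp gp - (betK + c) * Nv (z - zs)
     - 2 * tauK * dotv (g - F z) (z - zs) + AA * Nv (g - F z).
Proof.
move=> y T1 T2 T3 sm lp.
set w := (F z - F zp) - (mu / 2) *: (z - zp).
have T4 : 0 <= L ^+ 2 * Nv (z - zp) - Nv w.
  by rewrite subr_ge0; apply: lipG => //; exact: ltW.
have T5 := Nv_ge0 (w + L *: (z' - z)).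
have T6 := Nv_ge0 ((8 * tauK) *: (gp - F zp) - (z' - z)).
have T7 := Nv_ge0 ((8 * tauK) *: (g - F z) + (z' - z)).
have N1 := Nv_ge0 (z' - z).
have N2 := Nv_ge0 (z - zp).
have alph0 : 0 <= alphK by rewrite /alphK divr_ge0 // ?mulr_ge0 // ltW.
have tau0 : 0 <= tauK by rewrite /tauK divr_ge0 // addr_ge0 // ltW.
set r1 := 1 / 2 - 5 / 4 * c - tauK * L.
set r2 := 1 / 4 - tauK * L.
have r10 : 0 <= r1.
  rewrite /r1. move: c8 tauL. generalize (tauK * L) => t. lra.
have r20 : 0 <= r2 by rewrite /r2; move: tauL; generalize (tauK * L) => t; lra.
have E : Vf z zp gp - (betK + c) * Nv (z - zs)
     - 2 * tauK * dotv (g - F z) (z - zs) + AA * Nv (g - F z) - (1 + c) * Vf z' z g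
   = 2 * dotv (y - z') (z' - zs) + 2 * alphK * dotv (F zs) (z' - zs)
     + 2 * alphK * (dotv (F z' - F zs) (z' - zs) - mu * Nv (z' - zs))
     + tauK / L * ((L ^+ 2 * Nv (z - zp) - Nv w) + Nv (w + L *: (z' - z)))
     + 1 / 8 * (Nv ((8 * tauK) *: (gp - F zp) - (z' - z)) + Nv ((8 * tauK) *: (g - F z) + (z' - z)))
     + r2 * Nv (z - zp) + r1 * Nv (z' - z).
  apply/eqP; rewrite -subr_eq0; apply/eqP.
  rewrite /Vf /AA /hh /r1 /r2 /w /y.
  sumify.
  apply: big1 => i _; rewrite !mxE /tauK /alphK /gamK /betK.
  field.
  have h1 : 0 < 1 + c by rewrite addr_gt0.
  by rewrite !lt0r_neq0.
rewrite -subr_ge0 E.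
have T3' : 0 <= dotv (F z' - F zs) (z' - zs) - mu * Nv (z' - zs) by rewrite subr_ge0.
have tL : 0 <= tauK / L by rewrite divr_ge0 // ltW.
have a2 : 0 <= 2 * alphK by rewrite mulr_ge0.
repeat apply: addr_ge0; try (apply: mulr_ge0 => //; try apply: addr_ge0 => //).
Qed.

Lemma Vlow (z zp gp : vec) :
  mu * Nv (z - zp) <= dotv (F z - F zp) (z - zp) ->
  Nv (F z - F zp) <= L ^+ 2 * Nv (z - zp) ->
  (5 / 8 + betK) * Nv (z - zs) <= Vf z zp gp.
Proof.
move=> sm lp.
set w := (F z - F zp) - (mu / 2) *: (z - zp).
have T4 : 0 <= L ^+ 2 * Nv (z - zp) - Nv w.
  by rewrite subr_ge0; apply: lipG => //; exact: ltW.
have T5 := Nv_ge0 (w - L *: (z - zs)).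
have T6 := Nv_ge0 ((8 * tauK) *: (gp - F zp) + (z - zs)).
have N1 := Nv_ge0 (z - zs).
have N2 := Nv_ge0 (z - zp).
have alph0 : 0 <= alphK by rewrite /alphK divr_ge0 // ?mulr_ge0 // ltW.
have tau0 : 0 <= tauK by rewrite /tauK divr_ge0 // addr_ge0 // ltW.
set r2 := 1 / 4 - tauK * L.
have r20 : 0 <= r2 by rewrite /r2; move: tauL; generalize (tauK * L) => t; lra.
have E : Vf z zp gp - (5 / 8 + betK) * Nv (z - zs) =
   tauK / L * (Nv (w - L *: (z - zs)) + (L ^+ 2 * Nv (z - zp) - Nv w))
   + 1 / 8 * Nv ((8 * tauK) *: (gp - F zp) + (z - zs))
   + r2 * (Nv (z - zs) + Nv (z - zp)).
  apply/eqP; rewrite -subr_eq0; apply/eqP.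
  rewrite /Vf /hh /r2 /w.
  sumify.
  apply: big1 => i _; rewrite !mxE /tauK /alphK /betK.
  field.
  have h1 : 0 < 1 + c by rewrite addr_gt0.
  by rewrite !lt0r_neq0.
rewrite -subr_ge0 E.
have tL : 0 <= tauK / L by rewrite divr_ge0 // ltW.
repeat apply: addr_ge0; try (apply: mulr_ge0 => //; try apply: addr_ge0 => //).
Qed.

Lemma V0id (z g : vec) :
  Vf z z g - (betK + c) * Nv (z - zs) - 2 * tauK * dotv (g - F z) (z - zs)
    + AA * Nv (g - F z) = (1 - c) * Nv (z - zs) + (AA + hh) * Nv (g - F z).
Proof.
apply/eqP; rewrite -subr_eq0; apply/eqP.
rewrite /Vf /AA /hh.
sumify.
apply: big1 => i _; rewrite !mxE /tauK /alphK /betK.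
field.
have h1 : 0 < 1 + c by rewrite addr_gt0.
by rewrite !lt0r_neq0.
Qed.
End Key.
End Alg.

Section Meas.
Variables (R : realType) (n : nat) (d : measure_display) (Xi : measurableType d).
Local Notation vec := 'rV[R]_n.

Lemma sec_meas (z : vec) :
  measurable_fun setT (fun x : Xi => (z, x) : g_sigma_algebraType (@rectangles R n d Xi)).
Proof.
pose f := (fun x : Xi => ((z : 'rV[R^o]_n), x) : g_sigma_algebraType (@rectangles R n d Xi)).
change (measurable_fun setT f).
have := (@measurability _ _ Xi (g_sigma_algebraType (@rectangles R n d Xi)) setT f (@rectangles R n d Xi)).
move=> /(_ erefl); apply.
rewrite /f.
move=> _ [_ [A oA [B mB <-]] <-].
have [Az|nAz] := pselect (A z).
  suff -> : setT `&` (fun x : Xi => (z, x)) @^-1` (A `*` B) = B by [].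
  by apply/seteqP; split => x /=; [case=> _ []|move=> Bx; split=> //].
suff -> : setT `&` (fun x : Xi => (z, x)) @^-1` (A `*` B) = set0 by [].
by apply/seteqP; split => x //=; case=> _ [].
Qed.

Lemma coord_meas (Fhat : vec -> Xi -> vec) (z : vec) i :
  oracle_measurable Fhat -> measurable_fun setT (fun x => Fhat z x 0 i).
Proof.
move=> om; have := om i => mf.
exact: (measurableT_comp mf (sec_meas z)).
Qed.

Lemma err_meas (Fhat : vec -> Xi -> vec) (F : vec -> vec) (z : vec) :
  oracle_measurable Fhat -> measurable_fun setT (fun x => enorm (Fhat z x - F z)).
Proof.
move=> om.
rewrite /enorm /dotv.
apply: (measurableT_comp (f := @Num.sqrt R)).
  apply: measurable_realfun.continuous_measurable_fun. exact: sqrt_continuous.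
apply: measurable_sum => i; rewrite /=.
under eq_fun do rewrite !mxE.
apply: measurable_realfun.measurable_funM; apply: measurable_realfun.measurable_funB => //; exact: coord_meas.
Qed.

Local Open Scope ereal_scope.
Variable (P : probability Xi R).

Lemma int_mono (f g : Xi -> \bar R) : (forall x, 0 <= f x) -> (forall x, f x <= g x) ->
  \int[P]_x f x <= \int[P]_x g x.
Proof.
move=> f0 fg; rewrite !ge0_integralTE //; last by move=> x; exact: le_trans (f0 x) (fg x).
apply: le_ereal_sup => _ [h hf <-]; exists h => //= x; exact: le_trans (hf x) (fg x).
Qed.

Lemma iexp_ge0 m (f : (nat -> Xi) -> \bar R) s : (forall s, 0 <= f s) -> 0 <= iexp P m f s.
Proof.
elim: m f s => [|m IH] f s f0 //=.
apply: IH => s'; apply: integral_ge0 => x _; exact: f0.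
Qed.

Lemma iexp_mono m (f g : (nat -> Xi) -> \bar R) s :
  (forall s, 0 <= f s) -> (forall s, f s <= g s) -> iexp P m f s <= iexp P m g s.
Proof.
elim: m f g s => [|m IH] f g s f0 fg /=; first exact: fg.
apply: IH => s'; first by apply: integral_ge0 => x _; exact: f0.
apply: int_mono => x; [exact: f0 | exact: fg].
Qed.

Lemma int_lin (f : Xi -> R) (a b c dl sg : R) :
  measurable_fun setT f -> (forall x, 0 <= f x)%R ->
  (0 <= a)%R -> (0 <= b)%R -> (0 <= c)%R ->
  \int[P]_x (f x)%:E <= dl%:E -> \int[P]_x (f x ^+ 2)%:E <= sg%:E ->
  \int[P]_x ((a + b * f x + c * f x ^+ 2)%R)%:E <= (a + b * dl + c * sg)%:E.
Proof.
move=> mf f0 a0 b0 c0 Hd Hs.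
have mfE : measurable_fun [set: Xi] (EFin \o f) by apply/measurable_EFinP.
have mf2 : measurable_fun [set: Xi] (fun x => f x ^+ 2)%R by exact: measurable_funX.
have mf2E : measurable_fun [set: Xi] (EFin \o (fun x => f x ^+ 2)%R) by apply/measurable_EFinP.
under eq_integral do rewrite EFinD EFinD (EFinM b) (EFinM c).
rewrite ge0_integralD //; try (by move=> x _; rewrite ?adde_ge0 ?mule_ge0 // lee_fin ?exprn_ge0); try (by apply: emeasurable_funD => //; exact: measurable_funeM); try exact: measurable_funeM.
rewrite ge0_integralD //; try (by move=> x _; rewrite ?adde_ge0 ?mule_ge0 // lee_fin ?exprn_ge0); try (by apply: emeasurable_funD => //; exact: measurable_funeM); try exact: measurable_funeM.
rewrite ge0_integralZl_EFin //; last by move=> x _; rewrite lee_fin.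
rewrite ge0_integralZl_EFin //; last by move=> x _; rewrite lee_fin exprn_ge0.
rewrite integral_cst //.
have P1 : P [set: Xi] = 1%E := probability_setT P.
rewrite -[X in a%:E * X]/(P [set: Xi]) P1.
rewrite mule1 !EFinD !EFinM.
apply: leeD; first apply: leeD => //.
- by rewrite lee_wpmul2l // lee_fin.
- by rewrite lee_wpmul2l // lee_fin.
Qed.
End Meas.

Ltac sumify :=
  rewrite /Nv /dotv;
  rewrite ?(mulrDr, mulrBr, mulrN, mulNr, opprD, opprK, mulr_sumr);
  rewrite -?sumrN -?big_split /=.

Section Traj.
Variables (R : realType) (n : nat) (d : measure_display) (Xi : measurableType d).
Local Notation vec := 'rV[R]_n.
Variables (Fhat : vec -> Xi -> vec) (P : vec -> vec) (a g t : R) (z0 : vec).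
Local Notation T s k := (em_traj Fhat P a g t z0 s k).

Lemma traj_step s k : T s k.+1 =
  let z := (T s k).1 in let zp := (T s k).2 in
  let gk := Fhat z (s k) in
  let gkm1 := if k is k''.+1 then Fhat zp (s k'') else gk in
  (P (z - a *: gk + g *: (z - zp) - t *: (gk - gkm1)), z).
Proof. by rewrite /=; case: (T s k). Qed.

Lemma traj_snd s k : (T s k.+1).2 = (T s k).1.
Proof. by rewrite traj_step. Qed.

Lemma traj_fstS s k : (T s k.+2).1 =
  P ((T s k.+1).1 - a *: Fhat (T s k.+1).1 (s k.+1) + g *: ((T s k.+1).1 - (T s k.+1).2)
     - t *: (Fhat (T s k.+1).1 (s k.+1) - Fhat (T s k.+1).2 (s k))).
Proof. by rewrite traj_step. Qed.

Lemma traj_fst0 s : (T s 1).1 =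
  P (z0 - a *: Fhat z0 (s 0) + g *: (z0 - z0) - t *: (Fhat z0 (s 0) - Fhat z0 (s 0))).
Proof. by []. Qed.

Lemma traj_dep s s' k : (forall i, (i < k)%N -> s i = s' i) -> T s k = T s' k.
Proof.
elim: k => [//|k IH] H.
rewrite !traj_step IH; last by move=> i ik; apply: H; exact: ltnW.
rewrite (H k) //; case: k IH H => [//|k] IH H.
by rewrite (H k) // ltnW.
Qed.

Lemma traj_Z (Z : set vec) s k : Z z0 -> em_is_proj Z P -> Z (T s k).1 /\ Z (T s k).2.
Proof.
move=> Z0 prj; elim: k => [//|k [IH1 IH2]].
rewrite traj_step /=; split => //; exact: (prj _).1.
Qed.
End Traj.

Lemma dotvNr (R : realType) n (u v : 'rV[R]_n) : dotv u (- v) = - dotv u v.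
Proof. by apply/eqP; rewrite -subr_eq0; apply/eqP; sumify; apply: big1 => i _; rewrite !mxE; ring. Qed.

Lemma enormN (R : realType) n (u : 'rV[R]_n) : enorm (- u) = enorm u.
Proof. by rewrite /enorm; congr Num.sqrt; apply/eqP; rewrite -subr_eq0; apply/eqP; sumify; apply: big1 => i _; rewrite !mxE; ring. Qed.

Lemma final_num (R : realType) (mu c q N0 sg dl : R) : 0 < mu -> 0 < c -> c <= 1/8 -> 0 <= q -> 0 <= N0 ->
  (q * ((1 - c) * N0 + (AA R mu c + hh R mu c) * sg ^+ 2) + (AA R mu c * sg ^+ 2 + tauK R mu c ^+ 2 * dl ^+ 2 / (betK R c + c)) / c * (1 - q * (1 + c))) / (5 / 8)
  <= 2 * q * N0 + 128 * c * sg ^+ 2 / (mu ^+ 2 * (1 + c)) + 4 * dl ^+ 2 / mu ^+ 2.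
Proof.
move=> mu0 c0 c8 q0 N00.
have c1 : 0 < 1 + c by rewrite addr_gt0.
have c3 : 0 < 3 + c by rewrite addr_gt0.
pose w := (mu ^+ 2)^-1.
pose p := (1 + c)^-1.
have w0 : 0 < w by rewrite /w invr_gt0 exprn_gt0.
have p0 : 0 < p by rewrite /p invr_gt0.
have pc : p * (1 + c) = 1 by rewrite /p mulVf // lt0r_neq0.
pose t1 := 8 / 5 * (q * (1 - c) * N0).
pose t2 := 8 / 5 * (sg ^+ 2 * w * c * p) * (32 * (2 + c) * p - 64 * q * p).
pose t3 := 8 / 5 * (dl ^+ 2 * w) * (4 * p / (3 + c)) * (1 - q * (1 + c)).
have E : (q * ((1 - c) * N0 + (AA R mu c + hh R mu c) * sg ^+ 2) + (AA R mu c * sg ^+ 2 + tauK R mu c ^+ 2 * dl ^+ 2 / (betK R c + c)) / c * (1 - q * (1 + c))) / (5 / 8) = t1 + t2 + t3.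
  rewrite /t1 /t2 /t3 /w /p /AA /hh /tauK /alphK /betK; field.
  have h5 : 0 < 2 * c + c * (1 + c) by rewrite addr_gt0 ?mulr_gt0.
  by rewrite !lt0r_neq0.
have E2 : 2 * q * N0 + 128 * c * sg ^+ 2 / (mu ^+ 2 * (1 + c)) + 4 * dl ^+ 2 / mu ^+ 2
   = 2 * q * N0 + (sg ^+ 2 * w * c * p) * 128 + (dl ^+ 2 * w) * 4.
  rewrite /w /p; field.
  by rewrite !lt0r_neq0.
rewrite E E2.
have h1 : t1 <= 2 * q * N0.
  have e1 : t1 = 8 / 5 * (q * N0) - 8 / 5 * (q * N0 * c) by rewrite /t1; ring.
  have f1 : 0 <= q * N0 by exact: mulr_ge0.
  have f2 : 0 <= q * N0 * c by rewrite mulr_ge0 // ltW.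
  have e2 : 2 * q * N0 = 2 * (q * N0) by ring.
  rewrite e1 e2; move: f1 f2; generalize (q * N0) (q * N0 * c) => A B; clear -A B; lra.
have p1 : p <= 1 by rewrite /p invf_le1 // lerDl ltW.
have pp : (2 + c) * p = 1 + p.
  have e : (2 + c) * p = p * (1 + c) + p by ring.
  by rewrite e pc.
have qp : 0 <= q * p by rewrite mulr_ge0 // ltW.
have h2 : t2 <= (sg ^+ 2 * w * c * p) * 128.
  have F0 : 0 <= sg ^+ 2 * w * c * p.
    apply: mulr_ge0; [apply: mulr_ge0; [apply: mulr_ge0; [exact: sqr_ge0| exact: ltW]| exact: ltW] | exact: ltW].
  have br : 8 / 5 * (32 * (2 + c) * p - 64 * q * p) <= 128.
    have e : 8 / 5 * (32 * (2 + c) * p - 64 * q * p) = 8 / 5 * (32 * ((2 + c) * p)) - 8 / 5 * (64 * (q * p)) by ring.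
    rewrite e pp; move: p1 qp; generalize p (q * p) => X Y; clear; lra.
  have e : t2 = (sg ^+ 2 * w * c * p) * (8 / 5 * (32 * (2 + c) * p - 64 * q * p)) by rewrite /t2; ring.
  by rewrite e; apply: ler_wpM2l.
have h3 : t3 <= (dl ^+ 2 * w) * 4.
  have G0 : 0 <= dl ^+ 2 * w by apply: mulr_ge0; [exact: sqr_ge0 | exact: ltW].
  have v0 : 0 <= 4 * p / (3 + c) by apply: divr_ge0; [apply: mulr_ge0 => //; exact: ltW | exact: ltW].
  have v1 : 4 * p / (3 + c) <= 4 / 3.
    rewrite ler_pdivrMr // mulrDr; have := ltW c0; move: p1; generalize p c => X Y; clear; lra.
  have u1 : 1 - q * (1 + c) <= 1 by rewrite lerBlDr lerDl mulr_ge0 // ltW.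
  have br : 8 / 5 * (4 * p / (3 + c) * (1 - q * (1 + c))) <= 4.
    move: v0 v1 u1; generalize (4 * p / (3 + c)) (1 - q * (1 + c)) => X Y; clear; nra.
  have e : t3 = (dl ^+ 2 * w) * (8 / 5 * (4 * p / (3 + c) * (1 - q * (1 + c)))) by rewrite /t3; ring.
  by rewrite e; apply: ler_wpM2l.
by rewrite lerD // lerD.
Qed.

Arguments Nv {R n}. Arguments enorm_sq {R n}. Arguments Nv_ge0 {R n}. Arguments enorm_ge0 {R n}. Arguments CS {R n}.
Arguments alphK {R}. Arguments tauK {R}. Arguments gamK {R}. Arguments betK {R}. Arguments hh {R}. Arguments AA {R}. Arguments Vf {R n}.
Arguments key {R n F zs mu c L}. Arguments Vlow {R n F zs mu c L}. Arguments V0id {R n F zs mu c}. Arguments proj_ineq {R n Z P}.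
Arguments int_lin {R d Xi P}. Arguments iexp_mono {R d Xi P}. Arguments iexp_ge0 {R d Xi P}. Arguments int_mono {R d Xi P}.
Arguments err_meas {R n d Xi}. Arguments traj_dep {R n d Xi Fhat P a g t z0}. Arguments traj_Z {R n d Xi Fhat P a g t z0}.
Arguments traj_step {R n d Xi Fhat P a g t z0}. Arguments traj_snd {R n d Xi Fhat P a g t z0}. Arguments traj_fstS {R n d Xi Fhat P a g t z0}. Arguments traj_fst0 {R n d Xi Fhat P a g t z0}. Arguments dotvNr {R n}. Arguments enormN {R n}.

Lemma amgm (R : realType) (k r t dl : R) : 0 < k -> - (k * r ^+ 2) + 2 * t * r * dl <= t ^+ 2 * dl ^+ 2 / k.
Proof.
move=> k0; rewrite ler_pdivlMr //.
have : 0 <= (k * r - t * dl) ^+ 2 by exact: sqr_ge0.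
nra.
Qed.

Section Main.
Variables (R : realType) (n : nat).
Local Notation vec := 'rV[R]_n.
Variables (Z : set vec) (F : vec -> vec) (mu L : R) (d : measure_display) (Xi : measurableType d)
  (Pr : probability Xi R) (Fhat : vec -> Xi -> vec) (delta sigma : R) (Proj : vec -> vec) (zs z0 : vec).
Hypothesis cvx : em_convex_set Z.
Hypothesis mu0 : 0 < mu.
Hypothesis muL : mu <= L.
Hypothesis sm : em_strongly_monotone Z F mu.
Hypothesis lip : em_lipschitz_on Z F L.
Hypothesis vi : is_VI_sol Z F zs.
Hypothesis prj : em_is_proj Z Proj.
Hypothesis om : oracle_measurable Fhat.
Hypothesis dl0 : 0 <= delta.
Hypothesis sg0 : 0 <= sigma.
Hypothesis Hd : forall z, Z z -> (\int[Pr]_x (enorm (Fhat z x - F z))%:E <= delta%:E)%E.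
Hypothesis Hs : forall z, Z z -> (\int[Pr]_x (enorm (Fhat z x - F z) ^+ 2)%:E <= (sigma ^+ 2)%:E)%E.
Hypothesis Z0 : Z z0.

Definition cc := mu / (8 * L).
Lemma L0 : 0 < L. Proof. exact: lt_le_trans mu0 muL. Qed.
Lemma c0 : 0 < cc. Proof. by rewrite /cc divr_gt0 // mulr_gt0 // L0. Qed.
Lemma c8 : cc <= 1 / 8.
Proof.
rewrite /cc ler_pdivrMr ?mulr_gt0 ?L0 //.
have := L0; move: muL; lra.
Qed.
Lemma tauL : tauK mu cc * L <= 1 / 4.
Proof.
have E : tauK mu cc * L = 1 / (4 * (1 + cc)).
  rewrite /tauK /alphK /cc; field.
  have := L0 => HL; have h1 : 0 < 8 * L + mu by rewrite addr_gt0 ?mulr_gt0.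
  have h2 : 0 < 1 + mu / (8 * L) by rewrite addr_gt0 // divr_gt0 // mulr_gt0.
  by rewrite !lt0r_neq0 // mulr_gt0.
rewrite E ler_pdivrMr ?mulr_gt0 ?addr_gt0 ?c0 //.
have := c0; lra.
Qed.

Local Notation T s k := (em_traj Fhat Proj (alphK mu cc) (gamK cc) (tauK mu cc) z0 s k).
Definition Vs (s : nat -> Xi) j := Vf F zs mu cc (T s j).1 (T s j).2 (Fhat (T s j).2 (s j.-1)).

Lemma pairs {z zp : vec} : Z z -> Z zp ->
  mu * Nv (z - zp) <= dotv (F z - F zp) (z - zp) /\ Nv (F z - F zp) <= L ^+ 2 * Nv (z - zp).
Proof.
move=> Hz Hzp; split; first by have := sm _ _ Hz Hzp; rewrite enorm_sq.
have := lip _ _ Hz Hzp; rewrite -!enorm_sq => H.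
have := enorm_ge0 (F z - F zp); have := enorm_ge0 (z - zp); have := L0; nra.
Qed.

Lemma Zzs : Z zs. Proof. by case: vi. Qed.

Lemma stepgen (z zp g gp : vec) : Z z -> Z zp ->
  (1 + cc) * Vf F zs mu cc (Proj (z - alphK mu cc *: g + gamK cc *: (z - zp) - tauK mu cc *: (g - gp))) z g <= Vf F zs mu cc z zp gp - (betK cc + cc) * Nv (z - zs)
     - 2 * tauK mu cc * dotv (g - F z) (z - zs) + AA mu cc * Nv (g - F z).
Proof.
move=> Hz Hzp.
set y := z - alphK mu cc *: g + gamK cc *: (z - zp) - tauK mu cc *: (g - gp).
have Zy := (prj y).1.
have [smp lpp] := pairs Hz Hzp.
have [sm1 _] := pairs Zy Zzs.
apply: (key mu0 c0 c8 L0 tauL) => //.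
- have := proj_ineq y zs cvx prj Zzs.
  by rewrite -[zs - Proj y]opprB dotvNr oppr_le0.
- by case: vi => _ /(_ _ Zy).
Qed.

Lemma tau0 : 0 <= tauK mu cc.
Proof.
have := c0; have := mu0 => m0 c0'.
rewrite /tauK /alphK; apply: divr_ge0; [apply: divr_ge0; [apply: mulr_ge0 => //; exact: ltW | exact: ltW] | apply: addr_ge0 => //; exact: ltW].
Qed.

Lemma upd_eq (s : nat -> Xi) j x : upd s j x j = x.
Proof. by rewrite /upd eqxx. Qed.
Lemma upd_lt (s : nat -> Xi) j x i : (i < j)%N -> upd s j x i = s i.
Proof. by move=> ij; rewrite /upd ltn_eqF. Qed.

Lemma stepV s j x : (0 < j)%N ->
  (1 + cc) * Vs (upd s j x) j.+1 <= Vs s j - (betK cc + cc) * Nv ((T s j).1 - zs)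
     + 2 * tauK mu cc * enorm ((T s j).1 - zs) * enorm (Fhat (T s j).1 x - F (T s j).1)
     + AA mu cc * enorm (Fhat (T s j).1 x - F (T s j).1) ^+ 2.
Proof.
case: j => [//|j] _.
have Tj : T (upd s j.+1 x) j.+1 = T s j.+1 by apply: traj_dep => i ij; rewrite upd_lt.
have [Hz Hzp] := traj_Z (Fhat:=Fhat) (a:=alphK mu cc) (g:=gamK cc) (t:=tauK mu cc) Z s j.+1 Z0 prj.
rewrite /Vs traj_fstS Tj (traj_snd _ j.+1) Tj upd_eq upd_lt //.
move: Hz Hzp; case: (T s j.+1) => z zp /= Hz Hzp.
apply: (le_trans (stepgen _ _ _ _ Hz Hzp)).
set e := Fhat z x - F z.
set D := z - zs.
have cs := CS e (- D); rewrite dotvNr enormN in cs.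
rewrite enorm_sq.
have t0 := tau0.
have Hab := ler_wpM2l t0 cs.
have E1 : 2 * tauK mu cc * enorm D * enorm e = 2 * (tauK mu cc * (enorm e * enorm D)) by ring.
have E2 : - (2 * tauK mu cc * dotv e D) = 2 * (tauK mu cc * - dotv e D) by ring.
rewrite E1 lerD2r lerD2l E2.
by apply: ler_wpM2l.
Qed.

Lemma step0 s x :
  (1 + cc) * Vs (upd s 0 x) 1 <= (1 - cc) * Nv (z0 - zs) + (AA mu cc + hh mu cc) * enorm (Fhat z0 x - F z0) ^+ 2.
Proof.
rewrite /Vs traj_fst0 (traj_snd _ 0) upd_eq /=.
apply: (le_trans (stepgen _ _ _ _ Z0 Z0)).
by rewrite (V0id mu0 c0) enorm_sq.
Qed.

Lemma TZ s j : Z (T s j).1 /\ Z (T s j).2.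
Proof. exact: (traj_Z (Fhat:=Fhat) (a:=alphK mu cc) (g:=gamK cc) (t:=tauK mu cc) Z s j Z0 prj). Qed.

Lemma bet0 : 0 <= betK cc.
Proof.
have := c0 => h; rewrite /betK; apply: divr_ge0; first by apply: mulr_ge0 => //; exact: ltW.
by apply: addr_ge0 => //; exact: ltW.
Qed.

Lemma Vs_low s j : (0 < j)%N -> (5 / 8 + betK cc) * Nv ((T s j).1 - zs) <= Vs s j.
Proof.
move=> j0; have [H1 H2] := TZ s j.
have [smp lpp] := pairs H1 H2.
exact: (Vlow mu0 c0 L0 tauL).
Qed.

Lemma Vs_gap s j : (0 < j)%N -> 0 <= Vs s j - (betK cc + cc) * Nv ((T s j).1 - zs).
Proof.
move=> j0; have := Vs_low s j j0; have := c8; have := bet0; have := Nv_ge0 ((T s j).1 - zs).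
move: (Vs s j) (Nv ((T s j).1 - zs)) (betK cc) cc => V N b c; nra.
Qed.

Lemma Vs_ge0 s j : (0 < j)%N -> 0 <= Vs s j.
Proof.
move=> j0; have := Vs_gap s j j0; have := c0; have := bet0; have := Nv_ge0 ((T s j).1 - zs).
move: (Vs s j) (Nv ((T s j).1 - zs)) (betK cc) cc => V N b c; nra.
Qed.
Definition lam := (1 + cc)^-1.
Definition C0 := AA mu cc * sigma ^+ 2 + tauK mu cc ^+ 2 * delta ^+ 2 / (betK cc + cc).
Definition Kc (K j : nat) := C0 / cc * (1 - lam ^+ (K - j)).
Definition W (K j : nat) (s : nat -> Xi) : \bar R := ((lam ^+ (K - j) * Vs s j + Kc K j) / (5 / 8))%:E.

Lemma h1c : 0 < 1 + cc. Proof. by rewrite addr_gt0 // c0. Qed.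
Lemma lam0 : 0 < lam. Proof. by rewrite /lam invr_gt0 h1c. Qed.
Lemma lamc : lam * (1 + cc) = 1. Proof. by rewrite /lam mulVf // lt0r_neq0 // h1c. Qed.
Lemma lam1 : lam <= 1.
Proof.
have := c0 => h; rewrite /lam invf_le1 ?h1c //.
by rewrite lerDl ltW.
Qed.
Lemma lamX1 p : lam ^+ p <= 1. Proof. by rewrite exprn_ile1 // ?lam1 // ltW // lam0. Qed.
Lemma AA0 : 0 <= AA mu cc.
Proof.
have := c0 => h; rewrite /AA /hh; apply: mulr_ge0; first by apply: addr_ge0 => //; exact: ltW.
by apply: mulr_ge0 => //; exact: sqr_ge0.
Qed.
Lemma bc0 : 0 < betK cc + cc. Proof. by rewrite ltr_wpDl ?bet0 ?c0. Qed.
Lemma C00 : 0 <= C0.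
Proof.
rewrite /C0; apply: addr_ge0; first by apply: mulr_ge0; [exact: AA0 | exact: sqr_ge0].
by apply: divr_ge0; [apply: mulr_ge0; exact: sqr_ge0 | exact: ltW bc0].
Qed.
Lemma Kc0 K j : 0 <= Kc K j.
Proof.
rewrite /Kc; apply: mulr_ge0; first by apply: divr_ge0; [exact: C00 | exact: ltW c0].
by rewrite subr_ge0 lamX1.
Qed.
Lemma W0' K j s : (0 < j)%N -> (0 <= W K j s)%E.
Proof.
move=> j0; rewrite /W lee_fin; apply: divr_ge0 => //; apply: addr_ge0; last exact: Kc0.
by apply: mulr_ge0; [rewrite exprn_ge0 // ltW // lam0 | exact: Vs_ge0].
Qed.
Lemma Kc_step K j : (j < K)%N -> Kc K j = Kc K j.+1 + C0 * lam ^+ (K - j).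
Proof.
move=> jK; rewrite /Kc -(subnSK jK) exprS.
have := c0 => h; rewrite /lam; field.
by rewrite !lt0r_neq0 // h1c.
Qed.

Lemma inner K j s : (0 < j)%N -> (j < K)%N ->
  (\int[Pr]_x W K j.+1 (upd s j x) <= W K j s)%E.
Proof.
move=> j0 jK.
have [Zz _] := TZ s j.
pose z := (T s j).1.
pose f x := enorm (Fhat z x - F z).
pose q := lam ^+ (K - j).
have q0 : 0 <= q by rewrite exprn_ge0 // ltW // lam0.
have pq : lam ^+ (K - j.+1) * lam = q by rewrite /q -(subnSK jK) exprSr.
pose N := Nv (z - zs).
pose r := enorm (z - zs).
pose bc := betK cc + cc.
pose a := (q * (Vs s j - bc * N) + Kc K j.+1) / (5 / 8).
pose b := q * (2 * tauK mu cc * r) / (5 / 8).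
pose c' := q * AA mu cc / (5 / 8).
have pt x : (W K j.+1 (upd s j x) <= ((a + b * f x + c' * f x ^+ 2))%:E)%E.
  rewrite /W lee_fin.
  have st := stepV s j x j0.
  have V' : Vs (upd s j x) j.+1 <= lam * (Vs s j - bc * N + 2 * tauK mu cc * r * f x + AA mu cc * f x ^+ 2).
    have H := ler_wpM2l (ltW lam0) st.
    rewrite mulrA lamc mul1r in H; exact: H.
  have E : a + b * f x + c' * f x ^+ 2 =
     (lam ^+ (K - j.+1) * (lam * (Vs s j - bc * N + 2 * tauK mu cc * r * f x + AA mu cc * f x ^+ 2)) + Kc K j.+1) / (5 / 8).
    by rewrite /a /b /c' -pq; field.
  rewrite E ler_pM2r ?invr_gt0 // lerD2r.
  by apply: ler_wpM2l => //; rewrite exprn_ge0 // ltW // lam0.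
apply: (le_trans (int_mono _ _ (fun x => W0' K j.+1 (upd s j x) (ltn0Sn j)) pt)).
apply: (le_trans (int_lin _ _ _ _ _ _ _ _ _ _ _ (Hd _ Zz) (Hs _ Zz))).
- exact: err_meas om.
- by move=> x; exact: enorm_ge0.
- rewrite /a; apply: divr_ge0 => //; apply: addr_ge0; last exact: Kc0.
  by apply: mulr_ge0 => //; exact: Vs_gap.
- rewrite /b; apply: divr_ge0 => //; apply: mulr_ge0 => //; apply: mulr_ge0; last exact: enorm_ge0.
  by apply: mulr_ge0 => //; exact: tau0.
- by rewrite /c'; apply: divr_ge0 => //; apply: mulr_ge0 => //; exact: AA0.
rewrite /W lee_fin (Kc_step _ _ jK) -/q.
have core : - (bc * N) + 2 * tauK mu cc * r * delta + AA mu cc * sigma ^+ 2 <= C0.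
  rewrite /C0 addrC lerD2l /N -enorm_sq -/r.
  rewrite -/bc; apply: amgm; exact: bc0.
have E2 : a + b * delta + c' * sigma ^+ 2 = (q * Vs s j + Kc K j.+1 + q * (- (bc * N) + 2 * tauK mu cc * r * delta + AA mu cc * sigma ^+ 2)) / (5 / 8).
  by rewrite /a /b /c'; field.
rewrite E2 ler_pM2r ?invr_gt0 // addrA (mulrC C0) lerD2l.
exact: ler_wpM2l.
Qed.
Definition W0 K := (lam ^+ K * ((1 - cc) * Nv (z0 - zs) + (AA mu cc + hh mu cc) * sigma ^+ 2) + Kc K 1) / (5 / 8).

Lemma hh0 : 0 <= hh mu cc. Proof. by rewrite /hh mulr_ge0 // sqr_ge0. Qed.

Lemma base K s : (0 < K)%N -> (iexp Pr 1 (W K 1) s <= (W0 K)%:E)%E.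
Proof.
move=> K0; rewrite [iexp _ _ _ _]/=.
pose f x := enorm (Fhat z0 x - F z0).
pose q := lam ^+ K.
have q0 : 0 <= q by rewrite exprn_ge0 // ltW // lam0.
have pq : lam ^+ (K - 1) * lam = q by rewrite /q -exprSr subn1 prednK.
pose a := (q * ((1 - cc) * Nv (z0 - zs)) + Kc K 1) / (5 / 8).
pose c' := q * (AA mu cc + hh mu cc) / (5 / 8).
have pt x : (W K 1 (upd s 0 x) <= ((a + 0 * f x + c' * f x ^+ 2))%:E)%E.
  rewrite /W lee_fin.
  have st := step0 s x.
  have V' : Vs (upd s 0 x) 1 <= lam * ((1 - cc) * Nv (z0 - zs) + (AA mu cc + hh mu cc) * f x ^+ 2).
    have H := ler_wpM2l (ltW lam0) st.
    rewrite mulrA lamc mul1r in H; exact: H.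
  have E : a + 0 * f x + c' * f x ^+ 2 =
     (lam ^+ (K - 1) * (lam * ((1 - cc) * Nv (z0 - zs) + (AA mu cc + hh mu cc) * f x ^+ 2)) + Kc K 1) / (5 / 8).
    by rewrite /a /c' -pq; field.
  rewrite E ler_pM2r ?invr_gt0 // lerD2r.
  by apply: ler_wpM2l => //; rewrite exprn_ge0 // ltW // lam0.
apply: (le_trans (int_mono _ _ (fun x => W0' K 1 (upd s 0 x) (ltn0Sn 0)) pt)).
apply: (le_trans (int_lin _ _ _ _ _ _ _ _ _ _ _ (Hd _ Z0) (Hs _ Z0))).
- exact: err_meas om.
- by move=> x; exact: enorm_ge0.
- rewrite /a; apply: divr_ge0 => //; apply: addr_ge0; last exact: Kc0.
  apply: mulr_ge0 => //; apply: mulr_ge0; last exact: Nv_ge0.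
  rewrite subr_ge0; apply: (le_trans c8); by rewrite ler_pdivrMr // mul1r ler1n.
- by [].
- rewrite /c'; apply: divr_ge0 => //; apply: mulr_ge0 => //; apply: addr_ge0; [exact: AA0 | exact: hh0].
rewrite lee_fin le_eqVlt; apply/orP; left; apply/eqP.
by rewrite /a /c' /W0 -/q; field.
Qed.

Lemma iexpS m (f : (nat -> Xi) -> \bar R) s :
  iexp Pr m.+1 f s = iexp Pr m (fun s' => (\int[Pr]_x f (upd s' m x))%E) s.
Proof. by []. Qed.

Lemma chain K : (0 < K)%N -> forall j, (0 < j)%N -> (j <= K)%N -> forall s,
  (iexp Pr j (W K j) s <= (W0 K)%:E)%E.
Proof.
move=> K0; elim=> [//|j IH] _ jK s.
case: j IH jK => [|j] IH jK; first exact: base.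
rewrite iexpS; apply: (le_trans _ (IH isT (ltnW jK) s)).
apply: iexp_mono.
- by move=> s'; apply: integral_ge0 => x _; exact: W0'.
- by move=> s'; apply: inner.
Qed.

Lemma main_bound K s : (0 < K)%N ->
  (iexp Pr K (fun s' => (enorm ((T s' K).1 - zs) ^+ 2)%:E) s <= (W0 K)%:E)%E.
Proof.
move=> K0; apply: le_trans; last exact: (@chain K K0 K K0 (leqnn K) s).
apply: iexp_mono => s'; first by rewrite lee_fin sqr_ge0.
rewrite /W lee_fin subnn expr0 mul1r /Kc subnn expr0 subrr mulr0 addr0.
rewrite ler_pdivlMr // enorm_sq.
have := Vs_low s' K K0; have := bet0; have := Nv_ge0 ((T s' K).1 - zs).
move: (Vs s' K) (Nv _) (betK cc) => V N b; nra.
Qed.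
End Main.

Theorem proposition2 (R : realType) (n : nat) (Z : set 'rV[R]_n)
  (F : 'rV[R]_n -> 'rV[R]_n) (mu L : R)
  (d : measure_display) (Xi : measurableType d) (Pr : probability Xi R)
  (Fhat : 'rV[R]_n -> Xi -> 'rV[R]_n) (delta sigma : R)
  (Proj : 'rV[R]_n -> 'rV[R]_n) (zs z0 : 'rV[R]_n) :
  Z !=set0 -> eclosed Z -> em_convex_set Z ->
  0 < mu -> mu <= L ->
  em_strongly_monotone Z F mu -> em_lipschitz_on Z F L ->
  is_VI_sol Z F zs ->
  em_is_proj Z Proj ->
  oracle_measurable Fhat ->
  0 <= delta -> 0 <= sigma ->
  (forall z, Z z -> (\int[Pr]_x (enorm (Fhat z x - F z))%:E <= delta%:E)%E) ->
  (forall z, Z z -> (\int[Pr]_x (enorm (Fhat z x - F z) ^+ 2)%:E <= (sigma ^+ 2)%:E)%E) ->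
  Z z0 ->
  let kappa := L / mu in
  let theta := 1 / 8 : R in
  let alpha := 1 / (4 * L) in
  let tau := alpha / (1 + theta / kappa) in
  let gamma := 1 / (8 * (kappa + theta)) in
  forall (k : nat) (s : nat -> Xi),
    (iexp Pr k
       (fun s' => (enorm (em_iter Fhat Proj alpha gamma tau z0 s' k - zs) ^+ 2)%:E) s
     <= (2 * (1 - 1 / (8 * kappa + 1)) ^+ k * enorm (z0 - zs) ^+ 2
         + 128 * sigma ^+ 2 / (mu * (8 * L + mu)) + 4 * delta ^+ 2 / mu ^+ 2)%:E)%E.
Proof.
move=> Zne ecl cvx mu0 muL sm lip vi prj om dl0 sg0 Hd Hs Z0 kappa theta alpha tau gamma k s.
have L0 : 0 < L by exact: lt_le_trans mu0 muL.
have c0 := @c0 R mu L mu0 muL.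
have c8 := @c8 R mu L mu0 muL.
set c := cc R mu L.
have cE : c = mu / (8 * L) by [].
have h8 : 0 < 8 * L + mu by rewrite addr_gt0 ?mulr_gt0.
have ea : alpha = alphK mu c.
  by rewrite /alpha /alphK cE; field; rewrite !lt0r_neq0.
have et : tau = tauK mu c.
  rewrite /tau /tauK -ea /theta /kappa cE; congr (_ / _); field; rewrite !lt0r_neq0 //.
have eg : gamma = gamK c.
  rewrite /gamma /gamK /kappa /theta cE; field.
  by rewrite !lt0r_neq0.
have el : 1 - 1 / (8 * kappa + 1) = lam R mu L.
  rewrite /lam -/c /kappa cE; field.
  by rewrite !lt0r_neq0.
rewrite ea et eg el.
have mu2 : 0 < mu ^+ 2 by rewrite exprn_gt0.
have B1 : 0 <= 128 * sigma ^+ 2 / (mu * (8 * L + mu)).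
  by apply: divr_ge0; [apply: mulr_ge0 => //; exact: sqr_ge0 | apply: mulr_ge0; exact: ltW].
have B2 : 0 <= 4 * delta ^+ 2 / mu ^+ 2.
  by apply: divr_ge0; [apply: mulr_ge0 => //; exact: sqr_ge0 | exact: ltW].
case: k => [|k].
  rewrite /= /em_iter /= lee_fin expr0 mulr1.
  have : 0 <= enorm (z0 - zs) ^+ 2 by exact: sqr_ge0.
  move: B1 B2; generalize (enorm (z0 - zs) ^+ 2) => N.
  generalize (128 * sigma ^+ 2 / (mu * (8 * L + mu))) (4 * delta ^+ 2 / mu ^+ 2) => a b.
  clear; lra.
apply: le_trans.
  exact: (@main_bound R n Z F mu L d Xi Pr Fhat delta sigma Proj zs z0 cvx mu0 muL sm lip vi prj om Hd Hs Z0 k.+1 s isT).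
rewrite lee_fin /W0 /Kc /C0 -/c.
have lq : lam R mu L ^+ (k.+1 - 1) = lam R mu L ^+ k.+1 * (1 + c).
  by rewrite subn1 /= exprS mulrAC (@lamc R mu L mu0 muL) mul1r.
rewrite lq.
apply: le_trans.
  apply: (@final_num R mu c (lam R mu L ^+ k.+1) (Nv (z0 - zs)) sigma delta mu0 c0 c8).
  - by rewrite exprn_ge0 // ltW // (@lam0 R mu L mu0 muL).
  - exact: Nv_ge0.
rewrite -enorm_sq.
have E : 128 * c * sigma ^+ 2 / (mu ^+ 2 * (1 + c)) = 128 * sigma ^+ 2 / (mu * (8 * L + mu)).
  rewrite cE; field.
  have h1 : 0 < 1 + mu / (8 * L) by rewrite addr_gt0 // divr_gt0 // mulr_gt0.
  by rewrite !lt0r_neq0 // mulr_gt0.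
by rewrite E.
Qed.
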